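(* Let $\mathcal F$ be a symmetric conservative clone with carrier $A$. Then $\rhd_0=\rhd_1=\mathrm R_2(\mathcal F)\cap(A^2_2\times A^2_2)$, and one of the following five cases holds, where in each case the stated equivalence holds for both $i=0$ and $i=1$ and for all $\mathbf x,\mathbf y\in A^2_2$: (1) $\mathbf x\rhd_i\mathbf y$ always; (2) $\mathbf x\rhd_i\mathbf y\iff\mathrm t(\mathbf x,\mathbf y)=0$; (3) $\mathbf x\rhd_i\mathbf y\iff\mathrm t(\mathbf x,\mathbf y)\in\{0,1\}$; (4) $|A|=4$ and $\mathbf x\rhd_i\mathbf y\iff\mathrm t(\mathbf x,\mathbf y)\in\{0,1,2\}$; (5) $|A|=3$ and $\mathbf x\rhd_i\mathbf y\iff\mathrm t(\mathbf x,\mathbf y)\in\{0,01,10\}$.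
   Context: $\mathcal O(A)=\bigcup_{n<\omega}A^{A^n}$; $\mathcal F_{[2]}=\mathcal F\cap A^{A^2}$; $S_A$ the permutations of $A$. A clone with carrier $A$ is a subset of $\mathcal O(A)$ containing all projections and closed under composition; conservative if $f(\mathbf a)\in\mathrm{ran}\,\mathbf a$ (set of entries) for all members; symmetric if $f_\sigma(\mathbf a)=\sigma^{-1}(f(\sigma(\mathbf a)))$ is a member for each member $f$ and $\sigma\in S_A$. $A^2_2$ is the set of pairs $\mathbf a=a_0a_1$ with $a_0\ne a_1$. $\mathrm R_2(\mathcal F)$: $\mathbf a\,\mathrm R_2(\mathcal F)\,\mathbf b$ iff some $\sigma\in S_A$ has $f(\mathbf b)=\sigma(f(\mathbf a))$ for all $f\in\mathcal F_{[2]}$. For $i\in\{0,1\}$, $\rhd_i$ is the relation on $A^2_2$: $\mathbf a\rhd_i\mathbf b$ iff for every $f\in\mathcal F_{[2]}$, $f(\mathbf a)=a_i$ implies $f(\mathbf b)=b_i$. The type $\mathrm t(\mathbf a,\mathbf b)$ of $\mathbf a=a_0a_1,\mathbf b=b_0b_1\in A^2_2$ is: $0$ if $\mathbf a=\mathbf b$; $1$ if $a_0=b_1$ and $a_1=b_0$; the string $ij$ ($i,j\in\{0,1\}$) if $a_i=b_j$ and $a_{1-i}\ne b_{1-j}$; $2$ if $\{a_0,a_1\}\cap\{b_0,b_1\}=\emptyset$. *)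

(* Defs.v *)
From mathcomp Require Import all_boot.
Set Implicit Arguments. Unset Strict Implicit. Unset Printing Implicit Defensive.

Definition op (A : Type) (n : nat) := ('I_n -> A) -> A.
Definition opset (A : Type) := forall n : nat, op A n -> Prop.

Definition is_clone (A : Type) (F : opset A) : Prop :=
  (forall n (i : 'I_n), F n (fun a => a i)) /\
  (forall n m (f : op A n) (g : 'I_n -> op A m),
      F n f -> (forall i, F m (g i)) -> F m (fun a => f (fun i => g i a))).

Definition conservative (A : Type) (F : opset A) : Prop :=
  forall n (f : op A n), F n f -> forall a : 'I_n -> A, exists i, f a = a i.

Definition symmetric_clone (A : Type) (F : opset A) : Prop :=
  forall n (f : op A n), F n f ->
  forall (sigma sigmai : A -> A), cancel sigma sigmai -> cancel sigmai sigma ->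
    F n (fun a => sigmai (f (fun i => sigma (a i)))).

Definition ent (A : Type) (x : A * A) : 'I_2 -> A :=
  fun i => if val i == 0 then x.1 else x.2.
(* x_i for i in {0,1} (false = 0, true = 1) *)
Definition sel (A : Type) (x : A * A) (i : bool) : A := if i then x.2 else x.1.

Definition distinct2 (A : Type) (x : A * A) : Prop := x.1 <> x.2.

Definition R2 (A : Type) (F : opset A) (a b : A * A) : Prop :=
  exists sigma sigmai : A -> A, cancel sigma sigmai /\ cancel sigmai sigma /\
    forall f : op A 2, F 2 f -> f (ent b) = sigma (f (ent a)).

Definition rhd (A : Type) (F : opset A) (i : bool) (a b : A * A) : Prop :=
  forall f : op A 2, F 2 f -> f (ent a) = sel a i -> f (ent b) = sel b i.

Inductive ptype : Type :=
| T0 | T1 | Tij (i j : bool) | T2.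

Definition has_type (A : Type) (a b : A * A) (tau : ptype) : Prop :=
  match tau with
  | T0 => a = b
  | T1 => a.1 = b.2 /\ a.2 = b.1
  | Tij i j => sel a i = sel b j /\ sel a (~~ i) <> sel b (~~ j)
  | T2 => a.1 <> b.1 /\ a.1 <> b.2 /\ a.2 <> b.1 /\ a.2 <> b.2
  end.

Definition card_is (A : Type) (n : nat) : Prop :=
  exists e : 'I_n -> A, bijective e.

(* Main.v *)
Require Import Defs.
Require Import Defs.
From Stdlib Require Import List Classical ClassicalEpsilon FunctionalExtensionality Lia.
From mathcomp Require Import all_boot.

Section S.
Variable A : Type.

Definition sw (p q : A) : A -> A := fun z =>
  if excluded_middle_informative (z = p) then q
  else if excluded_middle_informative (z = q) then p else z.

Ltac dem := repeat (match goal with |- context [excluded_middle_informative ?P] =>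
  destruct (excluded_middle_informative P) end; cbn [is_left]).
Lemma sw_p p q : sw p q p = q.
Proof. unfold sw. dem; congruence. Qed.
Lemma sw_o p q z : z <> p -> z <> q -> sw p q z = z.
Proof. intros. unfold sw. dem; congruence. Qed.
Lemma sw_inv p q z : sw p q (sw p q z) = z.
Proof. unfold sw. dem; congruence. Qed.

Lemma perm_ex (us vs : list A) : NoDup us -> NoDup vs -> length us = length vs ->
  exists s si : A -> A, cancel s si /\ cancel si s /\ List.map s us = vs.
Proof.
revert vs; induction us as [|u us IH]; intros [|v vs] Hu Hv Hl; simpl in Hl; try discriminate.
- exists id, id; split; [|split]; try intro; reflexivity.
- apply NoDup_cons_iff in Hu as [Hu Hus]. apply NoDup_cons_iff in Hv as [Hv Hvs].
  destruct (IH vs Hus Hvs ltac:(congruence)) as [s0 [si0 [c1 [c2 Hm]]]].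
  set p := s0 u.
  exists (fun z => sw p v (s0 z)), (fun z => si0 (sw p v z)).
  split; [|split].
  + intro z. rewrite sw_inv. apply c1.
  + intro z. rewrite c2. apply sw_inv.
  + simpl. rewrite sw_p. f_equal.
    rewrite <- (map_map s0 (sw p v)). rewrite Hm.
    rewrite <- (map_id vs) at 2. apply map_ext_in. intros w Hw.
    apply sw_o.
    * intro E. subst w. rewrite <- Hm in Hw. apply in_map_iff in Hw as [u' [E' Hu']].
      assert (u' = u) by (rewrite <- (c1 u'); rewrite E'; unfold p; apply c1). subst. contradiction.
    * intro E; subst; contradiction.
Qed.

Lemma avoid (ws bs : list A) : NoDup ws -> lt (length bs) (length ws) ->
  exists w, In w ws /\ ~ In w bs.
Proof.
intros H L. apply NNPP. intro C.
assert (incl ws bs).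
{ intros w Hw. apply NNPP. intro Hn. apply C. exists w; auto. }
pose proof (NoDup_incl_length H H0). lia.
Qed.

Lemma card_list (w : A) ws : NoDup (w :: ws) -> (forall z, In z (w :: ws)) ->
  card_is A (length (w :: ws)).
Proof.
intros Hn Hall. set l := w :: ws.
pose e := fun i : 'I_(length l) => List.nth (val i) l w.
assert (surj : forall z, exists i, e i = z).
{ intro z. destruct (In_nth l z w (Hall z)) as [k [Hk Ek]].
  assert (Hk' : (k < length l)%N) by (apply/ltP; exact Hk).
  exists (Ordinal Hk'). exact Ek. }
pose g := fun z => proj1_sig (constructive_indefinite_description _ (surj z)).
exists e. exists g.
- intro i. unfold g. destruct (constructive_indefinite_description _ (surj (e i))) as [j Ej].
  simpl. apply val_inj. unfold e in Ej. apply (proj1 (NoDup_nth l w) Hn); auto.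
  apply/ltP; apply ltn_ord. apply/ltP; apply ltn_ord.
- intro z. unfold g. destruct (constructive_indefinite_description _ (surj z)) as [j Ej]. exact Ej.
Qed.
End S.

Section T.
Variable A : Type.
Variable F : opset A.
Hypothesis HF : is_clone F.
Hypothesis Hcons : conservative F.
Hypothesis Hsym : symmetric_clone F.

Definition R := rhd F false.
Definition pm (s : A -> A) (x : A * A) := (s x.1, s x.2).

Lemma Rrefl x : R x x. Proof. intros f _ H; exact H. Qed.
Lemma Rtrans x y z : R x y -> R y z -> R x z.
Proof. intros H1 H2 f Hf H. apply H2; auto. Qed.

Lemma ent_pm s x : (fun i => s (ent x i)) = ent (pm s x).
Proof. apply functional_extensionality. intro i. unfold ent. by case: (val i == 0). Qed.

Lemma Rinv s si x y : cancel s si -> cancel si s -> R x y -> R (pm s x) (pm s y).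
Proof.
intros c1 c2 H f Hf Hx.
pose proof (Hsym _ _ Hf _ _ c1 c2) as Hg.
specialize (H _ Hg). cbv beta in H. rewrite !ent_pm in H.
rewrite Hx in H. simpl in H. specialize (H (c1 _)).
simpl. rewrite <- H. rewrite c2. reflexivity.
Qed.

Lemma cons2 f x : F 2 f -> f (ent x) = x.1 \/ f (ent x) = x.2.
Proof.
intros Hf. destruct (Hcons _ _ Hf (ent x)) as [i Hi]. rewrite Hi. unfold ent.
case: (val i == 0); auto.
Qed.

Lemma Rconv x y : distinct2 x -> distinct2 y -> (rhd F true x y <-> R y x).
Proof.
unfold distinct2; intros dx dy; split.
- intros H f Hf E. destruct (cons2 _ x Hf) as [E'|E']; auto.
  exfalso. specialize (H f Hf E'). simpl in *. congruence.
- intros H f Hf E. destruct (cons2 _ y Hf) as [E'|E']; auto.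
  exfalso. specialize (H f Hf E'). simpl in *. congruence.
Qed.

Lemma shapes (a b c d : A) : a <> b -> c <> d ->
  (c = a /\ d = b) \/ (c = b /\ d = a) \/ (c = a /\ d <> b) \/ (d = b /\ c <> a)
  \/ (d = a /\ c <> b) \/ (c = b /\ d <> a)
  \/ (c <> a /\ c <> b /\ d <> a /\ d <> b).
Proof.
intros. destruct (classic (c = a)); destruct (classic (c = b));
destruct (classic (d = a)); destruct (classic (d = b)); subst; tauto.
Qed.

Ltac nodup := repeat constructor; simpl; intuition congruence.

Ltac move_by l1 l2 H :=
  let s := fresh "s" in let si := fresh "si" in let c1 := fresh "c1" in
  let c2 := fresh "c2" in let Hm := fresh "Hm" in
  destruct (perm_ex _ l1 l2 ltac:(nodup) ltac:(nodup) erefl) as [s [si [c1 [c2 Hm]]]];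
  simpl in Hm; injection Hm; intros; clear Hm;
  let HR := fresh "HR" in
  pose proof (Rinv _ _ _ _ c1 c2 H) as HR; unfold pm in HR; simpl in HR;
  repeat match goal with E : s _ = _ |- _ => rewrite E in HR; clear E end.

Lemma Rsym a b c d : a <> b -> c <> d -> R (a, b) (c, d) -> R (c, d) (a, b).
Proof.
intros ab cd H.
destruct (shapes _ _ _ _ ab cd) as [[-> ->]|[[-> ->]|[[-> ?]|[[-> ?]|[[-> ?]|[[-> ?]| [? [? [? ?]]]]]]]]].
- exact H.
- move_by [:: a; b] [:: b; a] H. assumption.
- move_by [:: a; b; d] [:: a; d; b] H. assumption.
- move_by [:: a; b; c] [:: c; b; a] H. assumption.
- move_by [:: a; b; c] [:: c; a; b] H. move_by [:: a; b; c] [:: b; c; a] H.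
  eapply Rtrans; eassumption.
- move_by [:: a; b; d] [:: b; d; a] H. move_by [:: a; b; d] [:: d; a; b] H.
  eapply Rtrans; eassumption.
- move_by [:: a; b; c; d] [:: c; d; a; b] H. assumption.
Qed.
Lemma RsymP x y : distinct2 x -> distinct2 y -> R x y -> R y x.
Proof. destruct x as [a b], y as [c d]. unfold distinct2; simpl. apply Rsym; auto. Qed.

Lemma rhdR i x y : distinct2 x -> distinct2 y -> (rhd F i x y <-> R x y).
Proof.
intros dx dy. destruct i.
- rewrite (Rconv _ _ dx dy). split; apply RsymP; auto.
- reflexivity.
Qed.

Lemma R_R2 x y : distinct2 x -> distinct2 y -> (R x y <-> R2 F x y).
Proof.
intros dx dy. split.
- intro H.
  assert (Hn1 : NoDup [:: x.1; x.2]) by (repeat constructor; simpl; unfold distinct2 in *; intuition congruence).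
  assert (Hn2 : NoDup [:: y.1; y.2]) by (repeat constructor; simpl; unfold distinct2 in *; intuition congruence).
  destruct (perm_ex _ _ _ Hn1 Hn2 erefl) as [s [si [c1 [c2 Hm]]]].
  simpl in Hm. injection Hm as E1 E2.
  exists s, si. split; [exact c1|split; [exact c2|]].
  intros f Hf. destruct (cons2 _ x Hf) as [E|E].
  + rewrite E E1. apply H; auto.
  + rewrite E E2. destruct (cons2 _ y Hf) as [E'|E']; auto.
    exfalso. apply (RsymP _ _ dx dy H) in E'; auto. simpl in E'. unfold distinct2 in dx. congruence.
- intros [s [si [c1 [c2 H]]]].
  pose proof (H _ (proj1 HF 2 ord0)) as H0. unfold ent in H0; simpl in H0.
  intros f Hf E. rewrite (H f Hf) E. simpl. congruence.
Qed.

Lemma ent_rev (x : A * A) : (fun i => ent x (rev_ord i)) = ent (x.2, x.1).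
Proof. apply functional_extensionality. intro i. unfold ent. by case: i => [[|[|n]] Hi]. Qed.

Lemma Rswap a b c d : a <> b -> c <> d -> R (a, b) (c, d) -> R (b, a) (d, c).
Proof.
intros ab cd H f Hf E.
pose proof (proj2 HF 2 2 f (fun i => fun a => a (rev_ord i)) Hf (fun i => proj1 HF 2 (rev_ord i))) as Hg.
cbv beta in Hg.
apply (rhdR true (a,b) (c,d)) in H; try (unfold distinct2; simpl; auto).
specialize (H _ Hg). rewrite !ent_rev in H. simpl in *. auto.
Qed.

Definition E1 : Prop := exists a b, a <> b /\ R (a,b) (b,a).
Definition E00 : Prop := exists a b c, a <> b /\ c <> a /\ c <> b /\ R (a,b) (a,c).
Definition E11 : Prop := exists a b c, a <> b /\ c <> a /\ c <> b /\ R (a,b) (c,b).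
Definition E01 : Prop := exists a b c, a <> b /\ c <> a /\ c <> b /\ R (a,b) (c,a).
Definition E10 : Prop := exists a b c, a <> b /\ c <> a /\ c <> b /\ R (a,b) (b,c).
Definition E2 : Prop := exists a b c d, a <> b /\ c <> d /\ c <> a /\ c <> b /\ d <> a /\ d <> b
  /\ R (a,b) (c,d).

Lemma W1 : E1 -> forall a b, a <> b -> R (a,b) (b,a).
Proof. intros [a0 [b0 [? H]]] a b ?. move_by [:: a0; b0] [:: a; b] H. assumption. Qed.
Lemma W00 : E00 -> forall a b c, a <> b -> c <> a -> c <> b -> R (a,b) (a,c).
Proof. intros [a0 [b0 [c0 [? [? [? H]]]]]] a b c ???.
move_by [:: a0; b0; c0] [:: a; b; c] H. assumption. Qed.
Lemma W11 : E11 -> forall a b c, a <> b -> c <> a -> c <> b -> R (a,b) (c,b).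
Proof. intros [a0 [b0 [c0 [? [? [? H]]]]]] a b c ???.
move_by [:: a0; b0; c0] [:: a; b; c] H. assumption. Qed.
Lemma W01 : E01 -> forall a b c, a <> b -> c <> a -> c <> b -> R (a,b) (c,a).
Proof. intros [a0 [b0 [c0 [? [? [? H]]]]]] a b c ???.
move_by [:: a0; b0; c0] [:: a; b; c] H. assumption. Qed.
Lemma W10 : E10 -> forall a b c, a <> b -> c <> a -> c <> b -> R (a,b) (b,c).
Proof. intros [a0 [b0 [c0 [? [? [? H]]]]]] a b c ???.
move_by [:: a0; b0; c0] [:: a; b; c] H. assumption. Qed.
Lemma W2 : E2 -> forall a b c d, a <> b -> c <> d -> c <> a -> c <> b -> d <> a -> d <> b ->
  R (a,b) (c,d).
Proof. intros [a0 [b0 [c0 [d0 [? [? [? [? [? [? H]]]]]]]]]] a b c d ??????.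
move_by [:: a0; b0; c0; d0] [:: a; b; c; d] H. assumption. Qed.

Lemma third (p q r : A) : p <> q -> r <> p -> r <> q -> forall a b : A, exists c, c <> a /\ c <> b.
Proof.
intros. destruct (avoid _ [:: p; q; r] [:: a; b]) as [w [_ Hw]].
- nodup.
- simpl; auto.
- exists w. simpl in Hw. split; intro; apply Hw; auto.
Qed.

Lemma fourth (p q r t : A) : p <> q -> r <> p -> r <> q -> t <> p -> t <> q -> t <> r ->
  forall a b : A, exists c d, c <> d /\ c <> a /\ c <> b /\ d <> a /\ d <> b.
Proof.
intros. destruct (avoid _ [:: p; q; r; t] [:: a; b]) as [c [_ Hc]]; [nodup|simpl; auto|].
destruct (avoid _ [:: p; q; r; t] [:: a; b; c]) as [d [_ Hd]]; [nodup|simpl; auto|].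
simpl in Hc, Hd. exists c, d. repeat split; intro; subst; tauto.
Qed.

Ltac solve_or := first [ solve [ repeat split; congruence ]
  | solve [ left; solve_or ] | solve [ right; solve_or ] ].
Ltac killR := match goal with N : context [False] |- _ =>
  solve [exfalso; eapply N; [eassumption | congruence ..]] end.
Ltac useS := match goal with S : forall _, _ |- _ => solve [eapply S; congruence] end.
Ltac finish :=
  let a := fresh "a" in let b := fresh "b" in let c := fresh "c" in let d := fresh "d" in
  let ab := fresh "ab" in let cd := fresh "cd" in
  intros [a b] [c d]; unfold distinct2; simpl; intros ab cd;
  destruct (shapes _ _ _ _ ab cd) as [[-> ->]|[[-> ->]|[[-> ?]|[[-> ?]|[[-> ?]|[[-> ?]| [? [? [? ?]]]]]]]]];
  (cbn [has_type sel fst snd negb]; split;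
  [ let HR := fresh "HR" in intro HR; first [ solve_or | killR ]
  | let HH := fresh "HH" in intro HH; decompose [and or] HH;
    first [ solve [exfalso; congruence] | apply Rrefl | useS ] ]).



Lemma classify :
  (forall x y : A * A, distinct2 x -> distinct2 y -> R x y)
   \/ (forall x y : A * A, distinct2 x -> distinct2 y ->
        (R x y <-> has_type x y T0))
   \/ (forall x y : A * A, distinct2 x -> distinct2 y ->
        (R x y <-> has_type x y T0 \/ has_type x y T1))
   \/ (card_is A 4 /\
       forall x y : A * A, distinct2 x -> distinct2 y ->
        (R x y <-> has_type x y T0 \/ has_type x y T1 \/ has_type x y T2))
   \/ (card_is A 3 /\
       forall x y : A * A, distinct2 x -> distinct2 y ->
        (R x y <-> has_type x y T0 \/ has_type x y (Tij false true)
                         \/ has_type x y (Tij true false))).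
Proof.
destruct (classic (E00 \/ E11)) as [H|H].
{
  left.
  assert (S00 : forall a b c, a <> b -> c <> a -> c <> b -> R (a,b) (a,c)).
  { destruct H as [H|H]; [exact (W00 H)|].
    intros a b c ???. apply Rswap. 3: apply (W11 H). all: congruence. }
  assert (S11 : forall a b c, a <> b -> c <> a -> c <> b -> R (a,b) (c,b)).
  { intros a b c ???. apply Rswap. 3: apply S00. all: congruence. }
  assert (T3 : forall a b : A, exists c, c <> a /\ c <> b).
  { unfold E00, E11 in H. destruct H as [[p [q [r [h1 [h2 [h3 _]]]]]]|[p [q [r [h1 [h2 [h3 _]]]]]]]; exact (third _ _ _ h1 h2 h3). }
  intros [a b] [c d]; unfold distinct2; simpl; intros ab cd.
  destruct (shapes _ _ _ _ ab cd) as [[-> ->]|[[-> ->]|[[-> ?]|[[-> ?]|[[-> ?]|[[-> ?]| [? [? [? ?]]]]]]]]].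
  - apply Rrefl.
  - destruct (T3 a b) as [e [? ?]].
    apply Rtrans with (a, e); [apply S00; congruence|].
    apply Rtrans with (b, e); [apply S11; congruence|]. apply S00; congruence.
  - apply S00; congruence.
  - apply S11; congruence.
  - apply Rtrans with (c, b); [apply S11; congruence|]. apply S00; congruence.
  - apply Rtrans with (a, d); [apply S00; congruence|]. apply S11; congruence.
  - apply Rtrans with (a, d); [apply S00; congruence|]. apply S11; congruence. }
assert (N00 : forall a b c, R (a,b) (a,c) -> a <> b -> c <> a -> c <> b -> False).
{ intros a b c ????. apply H. left. exists a, b, c. auto. }
assert (N11 : forall a b c, R (a,b) (c,b) -> a <> b -> c <> a -> c <> b -> False).
{ intros a b c ????. apply H. right. exists a, b, c. auto. }
clear H.
destruct (classic (E01 \/ E10)) as [H|H].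
{ (* |A| = 3 *)
  right; right; right; right.
  assert (S01 : forall a b c, a <> b -> c <> a -> c <> b -> R (a,b) (c,a)).
  { destruct H as [H|H]; [exact (W01 H)|].
    intros a b c ???. apply Rsym; try congruence. apply (W10 H); congruence. }
  assert (S10 : forall a b c, a <> b -> c <> a -> c <> b -> R (a,b) (b,c)).
  { intros a b c ???. apply Rsym; try congruence. apply S01; congruence. }
  assert (Hw : exists p q r : A, p <> q /\ r <> p /\ r <> q).
  { unfold E01, E10 in H. destruct H as [[p [q [r [? [? [? _]]]]]]|[p [q [r [? [? [? _]]]]]]];
    exists p, q, r; auto. }
  clear H. destruct Hw as [p [q [r [pq [rp rq]]]]].
  pose proof (third _ _ _ pq rp rq) as T3.
  assert (N1 : forall a b, R (a,b) (b,a) -> a <> b -> False).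
  { intros a b HR ab. destruct (T3 a b) as [c [? ?]]. apply (N11 a b c); try congruence.
    apply Rtrans with (b,a); [exact HR|apply S01; congruence]. }
  assert (no4 : forall a b c d : A, a <> b -> c <> a -> c <> b -> d <> a -> d <> b -> d <> c -> False).
  { intros a b c d ??????. apply (N00 a b d); try congruence.
    apply Rtrans with (c,a); [apply S01; congruence|].
    apply Rtrans with (d,c); [apply S01; congruence|]. apply S01; congruence. }
  assert (N2 : forall a b c d, R (a,b) (c,d) -> a <> b -> c <> d -> c <> a -> c <> b -> d <> a -> d <> b -> False).
  { intros a b c d _ ??????. apply (no4 a b c d); congruence. }
  split.
  - assert (Hall : forall z, In z [:: p; q; r]).
    { intro z. simpl. apply NNPP. intro Hz. apply (no4 p q r z); intuition congruence. }
    exact (card_list _ p [:: q; r] ltac:(nodup) Hall).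
  - clear T3 no4 Hsym Hcons HF. finish.
}
assert (N01 : forall a b c, R (a,b) (c,a) -> a <> b -> c <> a -> c <> b -> False).
{ intros a b c ????. apply H. left. exists a, b, c. auto. }
assert (N10 : forall a b c, R (a,b) (b,c) -> a <> b -> c <> a -> c <> b -> False).
{ intros a b c ????. apply H. right. exists a, b, c. auto. }
clear H.
destruct (classic E2) as [H|H].
{ (* |A| = 4 *)
  right; right; right; left.
  pose proof (W2 H) as S2.
  unfold E2 in H. destruct H as [p [q [r [t [h1 [h2 [h3 [h4 [h5 [h6 _]]]]]]]]]].
  pose proof (fourth _ _ _ _ h1 h3 h4 h5 h6 (nesym h2)) as T4.
  assert (no5 : forall a b c d e : A, a <> b -> c <> d -> c <> a -> c <> b -> d <> a -> d <> b ->
     e <> a -> e <> b -> e <> c -> e <> d -> False).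
  { intros a b c d e ??????????. apply (N00 a b e); try congruence.
    apply Rtrans with (c,d); apply S2; congruence. }
  assert (S1 : forall a b, a <> b -> R (a,b) (b,a)).
  { intros a b ab. destruct (T4 a b) as [c [d [? [? [? [? ?]]]]]].
    apply Rtrans with (c,d); apply S2; congruence. }
  split.
  - assert (Hall : forall z, In z [:: p; q; r; t]).
    { intro z. simpl. apply NNPP. intro Hz. apply (no5 p q r t z); intuition congruence. }
    exact (card_list _ p [:: q; r; t] ltac:(nodup) Hall).
  - clear T4 no5 Hsym Hcons HF. finish.
}
assert (N2 : forall a b c d, R (a,b) (c,d) -> a <> b -> c <> d -> c <> a -> c <> b -> d <> a -> d <> b -> False).
{ intros a b c d ???????. apply H. exists a, b, c, d. auto 10. }
clear H.
destruct (classic E1) as [H|H].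
{ right; right; left. pose proof (W1 H) as S1. clear H Hsym Hcons HF. finish. }
assert (N1 : forall a b, R (a,b) (b,a) -> a <> b -> False).
{ intros a b ??. apply H. exists a, b. auto. }
clear H.
right; left. clear Hsym Hcons HF. finish.
Qed.
End T.

Theorem mainTheorem18 (A : Type) (F : opset A)
  (HF : is_clone F) (Hcons : conservative F) (Hsym : symmetric_clone F) :
  (forall x y : A * A, distinct2 x -> distinct2 y ->
     (rhd F false x y <-> rhd F true x y) /\ (rhd F false x y <-> R2 F x y)) /\
  ((forall (i : bool) (x y : A * A), distinct2 x -> distinct2 y -> rhd F i x y)
   \/ (forall (i : bool) (x y : A * A), distinct2 x -> distinct2 y ->
        (rhd F i x y <-> has_type x y T0))
   \/ (forall (i : bool) (x y : A * A), distinct2 x -> distinct2 y ->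
        (rhd F i x y <-> has_type x y T0 \/ has_type x y T1))
   \/ (card_is A 4 /\
       forall (i : bool) (x y : A * A), distinct2 x -> distinct2 y ->
        (rhd F i x y <-> has_type x y T0 \/ has_type x y T1 \/ has_type x y T2))
   \/ (card_is A 3 /\
       forall (i : bool) (x y : A * A), distinct2 x -> distinct2 y ->
        (rhd F i x y <-> has_type x y T0 \/ has_type x y (Tij false true)
                         \/ has_type x y (Tij true false)))).
Proof.
split.
- intros x y dx dy.
  pose proof (rhdR _ _ Hcons Hsym true _ _ dx dy) as E1.
  pose proof (R_R2 _ _ HF Hcons Hsym _ _ dx dy) as E2.
  change (rhd F false x y) with (R A F x y). tauto.
- destruct (classify _ _ HF Hcons Hsym) as [H|[H|[H|[[C H]|[C H]]]]];
  [left|right;left|right;right;left|right;right;right;left|right;right;right;right];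
  repeat match goal with |- _ /\ _ => split; [assumption|] end;
  intros j x y dx dy; rewrite (rhdR _ _ Hcons Hsym j _ _ dx dy); auto.
Qed.
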